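(* Let $S=\mathbb{C}[w,x,y,z]$ with its standard grading, let $f\in S$ be homogeneous, let $J=(f_w,f_x,f_y,f_z)\subset S$ be its Jacobian ideal, and let $p_1,\dots,p_r\in\mathbb{C}^4\setminus\{0\}$ be points. Let $M\ge 1$ and let $D_1,\dots,D_M$ be linear functionals on $S$ of the form $D_j(h)=\sum_{\alpha\in A_j}c_{j,\alpha}\,(\partial^{\alpha}h)(p_{i(j)})$, where $i(j)\in\{1,\dots,r\}$, $A_j\subset\mathbb{Z}_{\ge0}^4$ is finite and $c_{j,\alpha}\in\mathbb{C}\setminus\{0\}$. Let $m_0$ be an integer and assume: (i) for every $m\ge m_0$ and every homogeneous $h\in S_m$, one has $h\in J$ if and only if $D_j(h)=0$ for all $j=1,\dots,M$; (ii) $\dim_{\mathbb{C}}(S/J)_m=M$ for every $m\ge m_0$. Let $L\in S$ be homogeneous of degree $e\ge 0$ such that $L(p_i)\neq 0$ for all $i$, and such that for every $j$, every $\alpha\in A_j$ and every multi-index $\beta\neq 0$ with $\beta\le\alpha$ componentwise, $(\partial^{\beta}L)(p_{i(j)})=0$. Then for every $m\ge m_0$, multiplication by $L$ induces a well-defined isomorphism $(S/J)_m\to(S/J)_{m+e}$; in particular, a homogeneous $h$ of degree $m\ge m_0$ with $h\notin J$ satisfies $hL\notin J$, and if the classes of $h_1,\dots,h_M\in S_m$ form a basis of $(S/J)_m$, then the classes of $Lh_1,\dots,Lh_M$ form a basis of $(S/J)_{m+e}$.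
   Context: For $\alpha=(\alpha_0,\alpha_1,\alpha_2,\alpha_3)\in\mathbb{Z}_{\ge0}^4$, $\partial^{\alpha}=\frac{\partial^{\alpha_0}}{\partial w^{\alpha_0}}\frac{\partial^{\alpha_1}}{\partial x^{\alpha_1}}\frac{\partial^{\alpha_2}}{\partial y^{\alpha_2}}\frac{\partial^{\alpha_3}}{\partial z^{\alpha_3}}$, and $(\partial^\alpha h)(p)$ denotes this derivative evaluated at the point $p$. $(S/J)_m$ denotes the degree-$m$ graded piece of the graded quotient ring $S/J$. In the intended application $f$ defines a surface in $\mathbb{P}^3$ with ADE singularities, $p_i$ are representatives of its singular points, $M$ is the global Milnor number (sum of Milnor numbers), $D_j$ are the differential operators characterizing the Jacobian ideal near the singular points, and $m_0=3(\deg f-2)$. *)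

(* Defs.v *)
(* multinomials' {mpoly _} over C := R[i] (complex numbers of
   a realType R, i.e. a model of the complex numbers). *)
From HB Require Import structures.
From mathcomp Require Import all_boot all_algebra.
From mathcomp Require Import reals.
From mathcomp.real_closed Require Import complex.
From mathcomp Require Import mpoly.
Set Implicit Arguments. Unset Strict Implicit. Unset Printing Implicit Defensive.
Import GRing.Theory.
Local Open Scope ring_scope.

(* S = C[w,x,y,z] : variables indexed by 'I_4 (0 = w, 1 = x, 2 = y, 3 = z). *)
Notation Spoly C := {mpoly C[4]}.

Definition inJac {C : fieldType} (f h : Spoly C) : Prop :=
  exists g : 'I_4 -> Spoly C, h = \sum_(k < 4) g k * f^`M(k).

(* S_m : homogeneous polynomials of degree m (0 included). *)
Definition inS {C : fieldType} (m : nat) (h : Spoly C) : Prop :=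
  h \is m.-homog.

(* The classes of hs : 'I_n -> S_m form a basis of (S/J)_m = S_m / (J ∩ S_m). *)
Definition quot_basis {C : fieldType} (f : Spoly C) (m n : nat)
    (hs : 'I_n -> Spoly C) : Prop :=
  [/\ forall k, inS m (hs k),
      (forall c : 'I_n -> C,
          inJac f (\sum_(k < n) c k *: hs k) -> forall k, c k = 0) &
      (forall g, inS m g ->
          exists c : 'I_n -> C, inJac f (g - \sum_(k < n) c k *: hs k))].

Definition quot_dim {C : fieldType} (f : Spoly C) (m n : nat) : Prop :=
  exists hs : 'I_n -> Spoly C, quot_basis f m hs.

Definition dereval {C : fieldType} (alpha : 'X_{1..4}) (h : Spoly C)
    (p : 'I_4 -> C) : C :=
  (h^`M[alpha]).@[p].

Definition Dfun {C : fieldType} {r M : nat} (p : 'I_r -> 'I_4 -> C)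
    (idx : 'I_M -> 'I_r) (A : 'I_M -> seq 'X_{1..4})
    (c : 'I_M -> 'X_{1..4} -> C) (j : 'I_M) (h : Spoly C) : C :=
  \sum_(alpha <- A j) c j alpha * dereval alpha h (p (idx j)).

(* Main.v *)
Require Import Defs.
From HB Require Import structures.
From mathcomp Require Import all_boot all_algebra.
From mathcomp Require Import reals.
From mathcomp.real_closed Require Import complex.
From mathcomp Require Import mpoly.
From mathcomp Require Import ring.
Import GRing.Theory.
Local Open Scope ring_scope.

Section Leib.
Variable (C : fieldType) (L : {mpoly C[4]}).

Inductive vanish (a : 'X_{1..4}) : {mpoly C[4]} -> Prop :=
| V0 : vanish a 0
| Vadd g1 g2 : vanish a g1 -> vanish a g2 -> vanish a (g1 + g2)
| Vterm q b : b != 0%MM -> (forall k, (b k <= a k)%N) -> vanish a (q * L^`M[b]).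

Lemma vanish_deriv a i g : vanish a g -> vanish (a + U_(i))%MM (g^`M(i)).
Proof.
elim=> [|g1 g2 _ IH1 _ IH2|q b bn0 ble].
- by rewrite mderiv0; constructor.
- by rewrite mderivD; constructor.
- rewrite mderivM -[(L^`M[b])^`M(i)]mderivmU1m -mderivmDm; apply: Vadd; apply: Vterm.
  + by [].
  + by move=> k; rewrite mnmDE; apply: leq_trans (ble k) (leq_addr _ _).
  + by rewrite mnmD_eq0 negb_and bn0.
  + by move=> k; rewrite !mnmDE leq_add2r.
Qed.

Lemma vanish_deriv' a i g : vanish a g -> vanish (a + U_(i))%MM (g^`M(i)).
Proof. exact: vanish_deriv. Qed.

Lemma vanish_eval (a : 'X_{1..4}) g (v : 'I_4 -> C) :
  (forall b, b != 0%MM -> (forall k, (b k <= a k)%N) -> (L^`M[b]).@[v] = 0) ->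
  vanish a g -> g.@[v] = 0.
Proof.
move=> H; elim=> [|g1 g2 _ IH1 _ IH2|q b bn0 ble].
- by rewrite meval0.
- by rewrite mevalD IH1 IH2 addr0.
- by rewrite mevalM H // mulr0.
Qed.

Lemma leib_vanish n : forall a h, mdeg a = n ->
  vanish a ((h * L)^`M[a] - h^`M[a] * L).
Proof.
elim: n => [|n IH] a h Ha.
- have -> : a = 0%MM by apply/eqP; rewrite -mdeg_eq0 Ha.
  rewrite !mderivm0m subrr; constructor.
case: (pickP (fun i => 0 < a i)%N) => [i Hi|H]; last first.
  have : a = 0%MM.
    by apply/mnmP => k; rewrite mnm0E; move: (H k) => /= /negbT; rewrite lt0n negbK => /eqP.
  by move=> E; move: Ha; rewrite E mdeg0.
have le1 : (U_(i) <= a)%MM.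
  by apply/mnm_lepP => k; rewrite mnm1E; case: eqP => [<-|]. 
set a' := (a - U_(i))%MM.
have Ea : a = (a' + U_(i))%MM by rewrite /a' submK.
have Ha' : mdeg a' = n by move: Ha; rewrite Ea mdegD mdeg1 addn1 => -[].
have V := IH a' h Ha'.
have -> : (h * L)^`M[a] - h^`M[a] * L =
   ((h * L)^`M[a'] - h^`M[a'] * L)^`M(i) + h^`M[a'] * L^`M[U_(i)].
  rewrite Ea !mderivmDm !mderivmU1m mderivB mderivM; ring.
apply: Vadd; first by rewrite Ea; apply: vanish_deriv.
apply: Vterm; first by rewrite mnm1_eq0.
by apply/mnm_lepP.
Qed.
End Leib.

Lemma Dfun_mulL (C : fieldType) (L : {mpoly C[4]}) (r M : nat)
  (p : 'I_r -> 'I_4 -> C) (idx : 'I_M -> 'I_r) (A : 'I_M -> seq 'X_{1..4})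
  (c : 'I_M -> 'X_{1..4} -> C) :
  (forall j alpha beta, alpha \in A j -> beta != 0%MM ->
     (forall k, (beta k <= alpha k)%N) ->
     dereval beta L (p (idx j)) = 0) ->
  forall j h, Dfun p idx A c j (h * L) = L.@[p (idx j)] * Dfun p idx A c j h.
Proof.
move=> H j h; rewrite /Dfun mulr_sumr big_seq [RHS]big_seq; apply: eq_bigr => al Hal.
rewrite /dereval.
have V := @leib_vanish C L _ al h erefl.
have E : ((h * L)^`M[al]).@[p (idx j)] - (h^`M[al]).@[p (idx j)] * L.@[p (idx j)] = 0.
  rewrite -mevalM -mevalB; apply: (@vanish_eval C L al) V.
  by move=> b bn0 ble; apply: (H j al).
by move/eqP: E; rewrite subr_eq0 => /eqP ->; ring.
Qed.

Section J.
Variable (C : fieldType) (f : {mpoly C[4]}).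
Lemma inJac0 : inJac f 0.
Proof. by exists (fun=> 0); rewrite big1 // => k _; rewrite mul0r. Qed.
Lemma inJacD g h : inJac f g -> inJac f h -> inJac f (g + h).
Proof.
move=> [a ->] [b ->]; exists (fun k => a k + b k); rewrite -big_split.
by apply: eq_bigr => k _; rewrite mulrDl.
Qed.
Lemma inJacMl q g : inJac f g -> inJac f (q * g).
Proof.
move=> [a ->]; exists (fun k => q * a k); rewrite mulr_sumr.
by apply: eq_bigr => k _; rewrite mulrA.
Qed.
Lemma inJacMr q g : inJac f g -> inJac f (g * q).
Proof. by rewrite mulrC; apply: inJacMl. Qed.
Lemma inJacZ a g : inJac f g -> inJac f (a *: g).
Proof. by rewrite -mul_mpolyC; apply: inJacMl. Qed.
Lemma inJacN g : inJac f g -> inJac f (- g).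
Proof. by rewrite -scaleN1r; apply: inJacZ. Qed.
Lemma inJacB g h : inJac f g -> inJac f h -> inJac f (g - h).
Proof. by move=> ? ?; apply: inJacD => //; apply: inJacN. Qed.
Lemma inJac_sum (I : Type) (s : seq I) (P : pred I) F :
  (forall i, P i -> inJac f (F i)) -> inJac f (\sum_(i <- s | P i) F i).
Proof.
move=> H; apply: (big_rec (fun x => inJac f x)); first exact: inJac0.
by move=> i x Pi Hx; apply: inJacD => //; apply: H.
Qed.
Lemma inS_sum m n (c : 'I_n -> C) hs : (forall k, inS m (hs k)) ->
  inS m (\sum_(k < n) c k *: hs k).
Proof.
move=> H; rewrite /inS; apply: (big_rec (fun x => x \is m.-homog)); first exact: dhomog0.
by move=> k x _ Hx; apply: dhomogD => //; apply: dhomogZ; apply: H.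
Qed.
End J.

Section LA.
Variable (C : fieldType) (f L : {mpoly C[4]}) (m m' n : nat).
Variable (hs gs : 'I_n -> {mpoly C[4]}).
Hypothesis inj : forall h, inS m h -> inJac f (h * L) -> inJac f h.
Hypothesis degL : forall h, inS m h -> inS m' (h * L).

Lemma sumL (c : 'I_n -> C) :
  \sum_k c k *: (L * hs k) = (\sum_k c k *: hs k) * L.
Proof.
rewrite mulr_suml; apply: eq_bigr => k _; by rewrite -scalerAl mulrC.
Qed.

Lemma indep_L : quot_basis f m hs ->
  forall c, inJac f (\sum_k c k *: (L * hs k)) -> forall k, c k = 0.
Proof.
move=> [Hh Hi _] c; rewrite sumL => /inj H; apply: Hi; apply: H.
exact: inS_sum.
Qed.

Lemma exch (a : 'I_n -> 'I_n -> C) (v : 'rV[C]_n) :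
  \sum_k v 0 k *: \sum_l a k l *: gs l
  = \sum_l (v *m \matrix_(k, l) a k l) 0 l *: gs l.
Proof.
under eq_bigr do rewrite scaler_sumr.
rewrite exchange_big; apply: eq_bigr => l _ /=.
rewrite mxE scaler_suml; apply: eq_bigr => k _.
by rewrite mxE scalerA.
Qed.

Lemma surj : quot_basis f m hs -> quot_basis f m' gs ->
  forall g, inS m' g -> exists h, inS m h /\ inJac f (g - h * L).
Proof.
move=> Bh Bg.
have [Hh _ _] := Bh; have [Hg _ Sg] := Bg.
have /fin_all_exists [a Ha] : forall k, exists c : 'I_n -> C,
    inJac f (L * hs k - \sum_l c l *: gs l).
  move=> k; apply: Sg; rewrite mulrC; exact: degL.
set Am := \matrix_(k, l) a k l.
have key : forall v : 'rV[C]_n,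
    \sum_k v 0 k *: (L * hs k) =
    \sum_k v 0 k *: (L * hs k - \sum_l a k l *: gs l)
    + \sum_l (v *m Am) 0 l *: gs l.
  move=> v; rewrite -exch -big_split; apply: eq_bigr => k _ /=.
  by rewrite -scalerDr subrK.
have unitA : Am \in unitmx.
  rewrite -row_free_unit -kermx_eq0; apply/eqP/row_matrixP => i.
  rewrite row0; set u := row i (kermx Am).
  have uA : u *m Am = 0.
    by rewrite /u -row_mul mulmx_ker row0.
  apply/rowP => k; rewrite [RHS]mxE.
  apply: (indep_L Bh (fun k => u 0 k)).
  rewrite key uA.
  rewrite [X in _ + X](eq_bigr (fun=> 0)); last by move=> l _; rewrite mxE scale0r.
  rewrite [X in _ + X]big1 // addr0; apply: inJac_sum => l _; apply: inJacZ; exact: Ha.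
move=> g Hgm; have [b Hb] := Sg g Hgm.
set brow := \row_l b l.
set d := brow *m invmx Am.
exists (\sum_k d 0 k *: hs k); split; first exact: inS_sum.
have dA : d *m Am = brow by rewrite /d -mulmxA mulVmx // mulmx1.
rewrite -sumL key dA.
have -> : \sum_l brow 0 l *: gs l = \sum_l b l *: gs l.
  by apply: eq_bigr => l _; rewrite mxE.
have -> : g - (\sum_k d 0 k *: (L * hs k - \sum_l a k l *: gs l) +
    \sum_l b l *: gs l) =
  (g - \sum_l b l *: gs l) - \sum_k d 0 k *: (L * hs k - \sum_l a k l *: gs l).
  by ring.
apply: inJacB => //; apply: inJac_sum => k _; apply: inJacZ; exact: Ha.
Qed.
End LA.
From mathcomp Require Import all_order.
Import Order.TTheory Num.Theory.
Theorem theorem3p7 (R : realType) (f : {mpoly R[i][4]}) (d : nat)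
  (r M : nat) (p : 'I_r -> 'I_4 -> R[i])
  (idx : 'I_M -> 'I_r) (A : 'I_M -> seq 'X_{1..4})
  (c : 'I_M -> 'X_{1..4} -> R[i]) (m0 : int)
  (L : {mpoly R[i][4]}) (e : nat) :
  f \is d.-homog ->
  (forall i, exists k, p i k != 0) ->
  (0 < M)%N ->
  (forall j, uniq (A j)) ->
  (forall j alpha, alpha \in A j -> c j alpha != 0) ->
  (* (i) *)
  (forall m : nat, m0 <= m%:Z -> forall h, inS m h ->
     (inJac f h <-> forall j, Dfun p idx A c j h = 0)) ->
  (* (ii) *)
  (forall m : nat, m0 <= m%:Z -> quot_dim f m M) ->
  L \is e.-homog ->
  (forall i, L.@[p i] != 0) ->
  (forall j alpha beta, alpha \in A j -> beta != 0%MM ->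
     (forall k, (beta k <= alpha k)%N) ->
     dereval beta L (p (idx j)) = 0) ->
  forall m : nat, m0 <= m%:Z ->
  [/\ (* well defined *)
      (forall h, inS m h -> inJac f h -> inJac f (h * L)),
      (* injective (in particular h ∉ J ⇒ hL ∉ J) *)
      (forall h, inS m h -> inJac f (h * L) -> inJac f h),
      (* surjective *)
      (forall g, inS (m + e) g -> exists h, inS m h /\ inJac f (g - h * L)) &
      (* bases are mapped to bases *)
      (forall hs : 'I_M -> {mpoly R[i][4]}, quot_basis f m hs ->
         quot_basis f (m + e) (fun k => L * hs k))].
Proof.
move=> Hf Hp HM Hu Hc Hi Hii HL Hnz Hder m Hm.
have Hm' : m0 <= (m + e)%N%:Z by apply: (le_trans Hm); rewrite lez_nat leq_addr.
have degL : forall h, inS m h -> inS (m + e) (h * L).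
  by move=> h Hh; apply: dhomogM.
have inj : forall h, inS m h -> inJac f (h * L) -> inJac f h.
  move=> h Hh HJ; apply/(Hi m Hm h Hh) => j.
  have := (proj1 (Hi (m + e)%N Hm' (h * L) (degL h Hh)) HJ) j.
  rewrite (@Dfun_mulL _ L _ _ p idx A c Hder) => /eqP; rewrite mulf_eq0 (negbTE (Hnz _)) /=.
  by move/eqP.
have [hs0 B0] := Hii m Hm.
have [gs0 G0] := Hii (m + e)%N Hm'.
have sj := @surj _ f L m (m + e)%N M hs0 gs0 inj degL B0 G0.
split.
- by move=> h _; apply: inJacMr.
- exact: inj.
- exact: sj.
move=> hs Bh; have [Hh _ Sh] := Bh; split.
- by move=> k; rewrite mulrC; apply: degL.
- exact: (@indep_L _ f L m M hs inj Bh).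
move=> g Hg; have [h [Hhm Hgh]] := sj g Hg.
have [cc Hcc] := Sh h Hhm; exists cc.
rewrite sumL.
have -> : g - (\sum_k cc k *: hs k) * L = (g - h * L) + (h - \sum_k cc k *: hs k) * L.
  by ring.
by apply: inJacD => //; apply: inJacMr.
Qed.
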